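(* Let $\mathbf A\in\mathbb R^{m\times n}$ and let $\mathbf x^0\in\mathbb R^n$ be $k$-sparse. If the RIP constant of $\mathbf A$ satisfies $\delta_{2k}\le 0.4404$ and $\alpha\ge 10\|\mathbf x^0\|_\infty$ (with $\alpha>0$), then $\mathbf x^0$ is the unique minimizer of problem (P2) with $\mathbf b:=\mathbf A\mathbf x^0$.
   Context: Problem (P2) is $\min_{\mathbf x}\{\|\mathbf x\|_1+\frac{1}{2\alpha}\|\mathbf x\|_2^2:\ \mathbf A\mathbf x=\mathbf b\}$. A vector is $k$-sparse if it has at most $k$ nonzero entries. The RIP constant $\delta_k$ of $\mathbf A$ is the smallest value such that $(1-\delta_k)\|\mathbf x\|_2^2\le\|\mathbf A\mathbf x\|_2^2\le(1+\delta_k)\|\mathbf x\|_2^2$ for all $k$-sparse $\mathbf x\in\mathbb R^n$. *)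

(* Defs.v *)
From HB Require Import structures.
From mathcomp Require Import all_boot all_order all_algebra.
Set Implicit Arguments. Unset Strict Implicit. Unset Printing Implicit Defensive.
Import Order.TTheory GRing.Theory Num.Theory.
Local Open Scope ring_scope.

Section Defs.
Variable R : rcfType.

Definition norm1 n (x : 'cV[R]_n) : R := \sum_(i < n) `|x i ord0|.
Definition norm2sq n (x : 'cV[R]_n) : R := \sum_(i < n) (x i ord0) ^+ 2.
Definition normInf n (x : 'cV[R]_n) : R := \big[Num.max/0]_(i < n) `|x i ord0|.

Definition ksparse n (k : nat) (x : 'cV[R]_n) : Prop :=
  (#|[set i : 'I_n | x i ord0 != 0%R]| <= k)%N.

Definition RIP_holds m n (A : 'M[R]_(m, n)) (k : nat) (d : R) : Prop :=
  forall x : 'cV[R]_n, ksparse k x ->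
    (1 - d) * norm2sq x <= norm2sq (A *m x) /\ norm2sq (A *m x) <= (1 + d) * norm2sq x.

Definition is_RIP_const m n (A : 'M[R]_(m, n)) (k : nat) (d : R) : Prop :=
  RIP_holds A k d /\ (forall d', RIP_holds A k d' -> d <= d').

Definition P2_obj n (alpha : R) (x : 'cV[R]_n) : R :=
  norm1 x + (2 * alpha)^-1 * norm2sq x.

Definition P2_unique_minimizer m n (A : 'M[R]_(m, n)) (b : 'cV[R]_m) (alpha : R)
    (x : 'cV[R]_n) : Prop :=
  A *m x = b /\
  (forall y : 'cV[R]_n, A *m y = b -> P2_obj alpha x <= P2_obj alpha y) /\
  (forall y : 'cV[R]_n, A *m y = b -> P2_obj alpha y <= P2_obj alpha x -> y = x).

End Defs.

(* Main.v *)
Require Import Defs.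
From HB Require Import structures.
From mathcomp Require Import all_boot all_order all_algebra.
From mathcomp Require Import ring lra zify.
Import Order.TTheory GRing.Theory Num.Theory.
Local Open Scope ring_scope.

Set Implicit Arguments. Unset Strict Implicit.

Section S.
Variable R : rcfType.

Lemma quad_disc (a b c : R) : 0 <= a -> (forall t, 0 <= c + b * t + a * t ^+ 2) ->
  b ^+ 2 <= 4 * a * c.
Proof.
move=> a0 H; have [ap|] := ltrP 0 a.
  have := H (- b / (2 * a)).
  have -> : c + b * (- b / (2 * a)) + a * (- b / (2 * a)) ^+ 2 = (4 * a * c - b ^+ 2) / (4 * a).
    by field; rewrite ?mulf_neq0 ?(gt_eqF ap) //; lra.
  by rewrite pmulr_lge0 ?subr_ge0 // invr_gt0; lra.
move=> a0'; have a00 : a = 0 by lra.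
subst a; have [b0|bn] := eqVneq b 0; first by rewrite b0; lra.
have := H (- (c + 1) / b).
rewrite mul0r addr0 mulrCA mulfV // mulr1; lra.
Qed.

Lemma sub_card (T : finType) (E : {set T}) k : (k <= #|E|)%N ->
  exists2 F : {set T}, F \subset E & #|F| = k.
Proof.
move=> kE; exists [set x in take k (enum E)].
  by apply/subsetP=> x; rewrite inE => /mem_take; rewrite mem_enum.
rewrite cardsE; move/card_uniqP: (take_uniq k (enum_uniq (mem E))) => ->.
by rewrite size_take -cardE; case: ltngtP kE => // ->.
Qed.

Lemma sqrt_amgm (e sk : R) : 0 <= e -> 0 < sk -> Num.sqrt e <= e / sk + sk / 4.
Proof.
move=> e0 sk0; set s := Num.sqrt e.
have se : s ^+ 2 = e by rewrite sqr_sqrtr.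
have -> : e / sk + sk / 4 = s + (2 * s - sk) ^+ 2 / (4 * sk).
  by rewrite -se; field; lra.
by rewrite lerDl divr_ge0 ?sqr_ge0 //; lra.
Qed.

Lemma set_bound n k (Dm : {set 'I_n}) (f : 'I_n -> R) (B sk : R) :
  (0 < k)%N -> 0 < sk -> sk ^+ 2 = k%:R -> 0 <= B ->
  (forall E : {set 'I_n}, E \subset Dm -> (#|E| <= k)%N -> \sum_(i in E) f i <= B * Num.sqrt #|E|%:R) ->
  forall E : {set 'I_n}, E \subset Dm -> \sum_(i in E) f i <= B * (#|E|%:R / sk + sk / 4).
Proof.
move=> k0 sk0 skk B0 H E; move: {2}#|E| (leqnn #|E|) => m; elim: m E => [|m IH] E Em ED.
  apply: le_trans (H _ ED _) _; first by move: Em; rewrite leqn0 => /eqP ->.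
  by rewrite ler_wpM2l // sqrt_amgm.
have [Ek|kE] := leqP #|E| k.
  by apply: le_trans (H _ ED Ek) _; rewrite ler_wpM2l // sqrt_amgm.
have [T TE Tk] := sub_card (ltnW kE).
rewrite (big_setID T) /= (setIidPr TE).
have cD : #|E :\: T| = (#|E| - k)%N by rewrite cardsD (setIidPr TE) Tk.
have HT := H T (subset_trans TE ED) (eq_leq Tk).
have cm : (#|E :\: T| <= m)%N by rewrite cD; lia.
have HD := IH (E :\: T) cm (subset_trans (subsetDl _ _) ED).
rewrite cD natrB ?(ltnW kE) // in HD; rewrite Tk in HT.
have : Num.sqrt k%:R = k%:R / sk.
  by rewrite -skk sqrtr_sqr ger0_norm ?expr2 ?mulfK ?(gt_eqF sk0) //; lra.
move=> sq; rewrite sq in HT.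
have -> : B * (#|E|%:R / sk + sk / 4) = B * (k%:R / sk) + B * ((#|E|%:R - k%:R) / sk + sk / 4).
  by field; lra.
exact: lerD.
Qed.
Lemma layer n (Dm : {set 'I_n}) (f r : 'I_n -> R) (B sk th : R) :
  0 < sk -> 0 <= B ->
  (forall E : {set 'I_n}, E \subset Dm -> \sum_(i in E) f i <= B * (#|E|%:R / sk + sk / 4)) ->
  0 <= th -> (forall i, 0 <= r i <= th) -> (forall i, i \notin Dm -> r i = 0) ->
  \sum_i f i * r i <= B * ((\sum_i r i) / sk + sk * th / 4).
Proof.
move=> sk0 B0 H.
have [m Sm] : exists m, (#|[set i | r i != 0%R]| <= m)%N by exists #|[set i | r i != 0%R]|.
elim: m r th Sm => [|m IH] r th Sm th0 rb rD.
  have r0 : forall i, r i = 0.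
    move=> i; apply/eqP; apply/negPn/negP => ri.
    by move: Sm; rewrite leqn0 => /eqP/cards0_eq/setP/(_ i); rewrite !inE ri.
  rewrite !big1 ?mul0r ?add0r => [|i _|i _]; rewrite ?r0 ?mulr0 //.
  by apply: mulr_ge0 => //; apply: divr_ge0; [apply: mulr_ge0|]; lra.
set Sp := [set i | r i != 0] in Sm *.
have [Sp0|[i0 i0S]] := set_0Vmem Sp.
  have r0 : forall i, r i = 0.
    move=> i; apply/eqP; apply/negPn/negP => ri.
    by move: Sp0 => /setP/(_ i); rewrite !inE ri.
  rewrite !big1 ?mul0r ?add0r => [|i _|i _]; rewrite ?r0 ?mulr0 //.
  by apply: mulr_ge0 => //; apply: divr_ge0; [apply: mulr_ge0|]; lra.
case: (arg_minP r i0S) => j jS' jmin.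
have jS : j \in Sp := jS'.
set t := r j.
have t0 : 0 < t by move: jS; rewrite /Sp inE /t => jn; have := rb j; rewrite lt_def jn /=; case/andP.
have tth : t <= th by have := rb j; case/andP.
pose r' i := r i - t * (i \in Sp)%:R.
have SpD : Sp \subset Dm.
  by apply/subsetP => i; rewrite /Sp inE; apply: contraR => /rD ->; rewrite eqxx.
have rb' : forall i, 0 <= r' i <= th - t.
  move=> i; rewrite /r'; case: (boolP (i \in Sp)) => iS.
    by have := jmin i iS; have /andP[? ?] := rb i; rewrite mulr1 /t => ?; apply/andP; split; lra.
  by move: iS; rewrite /Sp inE negbK => /eqP ->; rewrite mulr0 subr0; apply/andP; split; lra.
have rD' : forall i, i \notin Dm -> r' i = 0.
  move=> i iD; rewrite /r' rD //; case: (boolP (i \in Sp)) => iS //; last by rewrite mulr0 subr0.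
  by move/subsetP: SpD => /(_ i iS); rewrite (negbTE iD).
have Sm' : (#|[set i | r' i != 0%R]| <= m)%N.
  have sub : [set i | r' i != 0%R] \subset Sp :\ j.
    apply/subsetP => i; rewrite inE /r'; case: (boolP (i \in Sp)) => iS; rewrite ?mulr1 ?mulr0 ?subr0 => ri.
      by rewrite in_setD1 iS andbT; apply: contraNneq ri => ->; rewrite /t subrr.
    by move: iS ri; rewrite /Sp inE negbK => /eqP ->; rewrite eqxx.
  have := subset_leq_card sub; move: Sm; rewrite (cardsD1 j Sp) jS; lia.
have thp : 0 <= th - t by lra.
have IHr := IH r' (th - t) Sm' thp rb' rD'.
have HS := H Sp SpD.
have e1 : \sum_i f i * r i = \sum_i f i * r' i + t * \sum_(i in Sp) f i.
  rewrite [X in _ = _ + t * X]big_mkcond /= mulr_sumr -big_split /=; apply: eq_bigr => i _.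
  rewrite /r'; case: (i \in Sp); rewrite ?mulr1 ?mulr0; ring.
have e2 : \sum_i r i = \sum_i r' i + t * #|Sp|%:R.
  rewrite -sum1_card natr_sum mulr_sumr [X in _ = _ + X]big_mkcond /= -big_split /=; apply: eq_bigr => i _.
  rewrite /r'; case: (i \in Sp); rewrite ?mulr1 ?mulr0; ring.
rewrite e1 e2.
have -> : B * ((\sum_i r' i + t * #|Sp|%:R) / sk + sk * th / 4) =
   B * ((\sum_i r' i) / sk + sk * (th - t) / 4) + t * (B * (#|Sp|%:R / sk + sk / 4)).
  by field; lra.
by apply: lerD => //; apply: ler_wpM2l => //; lra.
Qed.
Lemma sq_le0 (x : R) : x ^+ 2 <= 0 -> x = 0.
Proof. by move=> h; apply/eqP; rewrite -sqrf_eq0 eq_le h sqr_ge0. Qed.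

Lemma final_alg (X N B W a d sk : R) : 0 <= X -> 0 <= N -> 0 < sk -> 0 <= a ->
  (1 - d) * N ^+ 2 <= X -> d <= 4404%:R / 10000%:R -> X <= B * W ->
  W = a / sk + N / 4 ->
  (B = 0 \/ (0 <= d /\ B ^+ 2 = 2 * d * (X - (1 - d) * N ^+ 2) /\ 0 <= B)) ->
  11%:R * (sk * N) <= 10%:R * a.
Proof.
move=> X0 N0 sk0 a0 DX dle XB HW; have d1 : d < 1 by lra.
case => [B0|[d0 [BB Bp]]].
  have X00 : X = 0 by move: XB; rewrite B0 mul0r; lra.
  have : (1 - d) * N ^+ 2 <= 0 by rewrite -X00.
  rewrite pmulr_rle0 ?subr_gt0 // => /sq_le0 ->; rewrite mulr0 mulr0; lra.
rewrite leNgt; apply/negP => Hc.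
have Np : 0 < N by rewrite lt_def N0 andbT; apply/eqP => N00; move: Hc; rewrite N00 mulr0 mulr0; lra.
have Wp : 0 < W.
  rewrite HW; have : 0 <= a / sk by apply: divr_ge0; lra.
  lra.
have XX : X ^+ 2 <= B ^+ 2 * W ^+ 2.
  by rewrite -exprMn ler_pXn2r ?nnegrE //; apply: mulr_ge0 => //; lra.
rewrite BB in XX.
have dp : 0 < d.
  rewrite lt_def d0 andbT; apply/eqP => d00; move: XX; rewrite d00 !mulr0 mul0r.
  rewrite mul0r => /sq_le0 X00; move: DX; rewrite X00 d00 subr0 mul1r => /sq_le0 N00.
  by move: Np; rewrite N00 ltxx.
have K : 2 * d * (1 - d) * N ^+ 2 * W ^+ 2 <= d ^+ 2 * W ^+ 4.
  have : 0 <= (X - d * W ^+ 2) ^+ 2 by apply: sqr_ge0.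
  move: XX; set w := W ^+ 2; have -> : W ^+ 4 = w ^+ 2 by rewrite /w -exprM.
  move=> XX H2; nra.
have K2 : 2 * (1 - d) * N ^+ 2 <= d * W ^+ 2.
  have w2 : 0 < d * W ^+ 2 by apply: mulr_gt0 => //; apply: exprn_gt0.
  rewrite -(ler_pM2l w2).
  have e1 : (d * W ^+ 2) * (2 * (1 - d) * N ^+ 2) = 2 * d * (1 - d) * N ^+ 2 * W ^+ 2 by ring.
  have e2 : (d * W ^+ 2) * (d * W ^+ 2) = d ^+ 2 * W ^+ 4 by ring.
  by rewrite e1 e2.
have Q0 : 0 < sk * N by apply: mulr_gt0.
set Q := sk * N in Hc Q0.
have WQ : sk * W < (135%:R / 100%:R) * Q.
  have e : sk * W = a + Q / 4 by rewrite HW /Q; field; lra.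
  rewrite e; lra.
have K3 : 2 * (1 - d) * Q ^+ 2 <= d * (sk * W) ^+ 2.
  have s2 : 0 <= sk ^+ 2 by apply: sqr_ge0.
  have := ler_wpM2l s2 K2.
  have e1 : sk ^+ 2 * (2 * (1 - d) * N ^+ 2) = 2 * (1 - d) * Q ^+ 2 by rewrite /Q; ring.
  have e2 : sk ^+ 2 * (d * W ^+ 2) = d * (sk * W) ^+ 2 by ring.
  by rewrite e1 e2.
have SW : (sk * W) ^+ 2 <= (135%:R / 100%:R) ^+ 2 * Q ^+ 2.
  have sW : 0 <= sk * W by apply: mulr_ge0; lra.
  rewrite -exprMn ler_pXn2r ?nnegrE //; try lra.
have : d * (sk * W) ^+ 2 <= d * ((135%:R / 100%:R) ^+ 2 * Q ^+ 2) by rewrite ler_pM2l.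
have q2 : 0 < Q ^+ 2 by apply: exprn_gt0.
nra.
Qed.
Definition dotv p (v w : 'cV[R]_p) : R := \sum_i v i ord0 * w i ord0.

Lemma norm2sq_addZ p (v w : 'cV[R]_p) t :
  norm2sq (v + t *: w) = norm2sq v + 2 * t * dotv v w + t ^+ 2 * norm2sq w.
Proof.
rewrite /norm2sq /dotv !mulr_sumr -!big_split /=; apply: eq_bigr => i _; rewrite !mxE; ring.
Qed.

Lemma norm2sq_dot p (v : 'cV[R]_p) : norm2sq v = dotv v v.
Proof. by apply: eq_bigr => i _; rewrite expr2. Qed.

Lemma norm2sq_ge0 p (v : 'cV[R]_p) : 0 <= norm2sq v.
Proof. by apply: sumr_ge0 => i _; apply: sqr_ge0. Qed.

Lemma dot_AtA m n (A : 'M[R]_(m, n)) u z :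
  dotv (A *m u) (A *m z) = \sum_i (A^T *m (A *m u)) i ord0 * z i ord0.
Proof.
have E1 : dotv (A *m u) (A *m z) = ((A *m u)^T *m (A *m z)) ord0 ord0.
  by rewrite /dotv [RHS]mxE; apply: eq_bigr => j _; rewrite [X in _ = X * _]mxE.
have E2 : \sum_i (A^T *m (A *m u)) i ord0 * z i ord0 = ((A^T *m (A *m u))^T *m z) ord0 ord0.
  by rewrite [RHS]mxE; apply: eq_bigr => j _; rewrite [X in _ = X * _]mxE.
by rewrite E1 E2 !trmx_mul trmxK !mulmxA.
Qed.

Lemma dotvN p (v w : 'cV[R]_p) : dotv v (- w) = - dotv v w.
Proof. by rewrite /dotv -sumrN; apply: eq_bigr => i _; rewrite mxE mulrN. Qed.

Lemma ksparse_sub n k (x : 'cV[R]_n) (T : {set 'I_n}) : (#|T| <= k)%N ->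
  (forall i, i \notin T -> x i ord0 = 0) -> ksparse k x.
Proof.
move=> Tk H; rewrite /ksparse; apply: leq_trans Tk; apply: subset_leq_card.
by apply/subsetP => i; rewrite inE; apply: contraR => /H ->; rewrite eqxx.
Qed.

Lemma sum_split n (F : 'I_n -> R) (T : {set 'I_n}) :
  \sum_i F i = \sum_(i in T) F i + \sum_(i in ~: T) F i.
Proof. by rewrite (bigID (mem T)) /=; congr (_ + _); apply: eq_bigl => i; rewrite inE. Qed.
Lemma top_prop n k (hh : 'I_n -> R) (S0 : {set 'I_n}) : (#|S0| <= k)%N ->
  (forall T : {set 'I_n}, (#|T| <= k)%N -> \sum_(i in T) `|hh i| <= \sum_(i in S0) `|hh i|) ->
  forall i, i \notin S0 -> k%:R * hh i ^+ 2 <= \sum_(j in S0) hh j ^+ 2.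
Proof.
move=> S0k Hmax i iS.
have [lt|ge] := ltnP #|S0| k.
  have := Hmax (i |: S0); rewrite cardsU1 iS /= add1n => /(_ lt).
  rewrite big_setU1 //= => H; have : `|hh i| <= 0 by lra.
  rewrite normr_le0 => /eqP ->.
  by rewrite expr0n /= mulr0; apply: sumr_ge0 => j _; apply: sqr_ge0.
have Sk : #|S0| = k by apply/eqP; rewrite eqn_leq S0k ge.
have cmp : forall j, j \in S0 -> hh i ^+ 2 <= hh j ^+ 2.
  move=> j jS; have := Hmax (i |: (S0 :\ j)).
  rewrite cardsU1 !inE (negbTE iS) andbF /= (cardsD1 j S0) jS in S0k *.
  move=> /(_ S0k); rewrite big_setU1 /=; last by rewrite !inE (negbTE iS) andbF.
  rewrite [X in _ <= X](bigD1 j) //= => H.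
  have : `|hh i| <= `|hh j|.
    have E : \sum_(k0 in S0 :\ j) `|hh k0| = \sum_(k0 in S0 | k0 != j) `|hh k0|.
      by apply: eq_bigl => x; rewrite !inE andbC.
    by move: H; rewrite E lerD2r.
  by rewrite -[hh i ^+ 2]real_normK ?num_real // -[hh j ^+ 2]real_normK ?num_real // ler_pXn2r ?nnegrE.
apply: le_trans (ler_sum _ cmp); rewrite sumr_const Sk.
by rewrite mulr_natl.
Qed.

Lemma l1_bound n k (hh : 'I_n -> R) (S0 : {set 'I_n}) (sk : R) : (#|S0| <= k)%N -> 0 < sk ->
  sk ^+ 2 = k%:R ->
  \sum_(i in S0) `|hh i| <= sk * Num.sqrt (\sum_(i in S0) hh i ^+ 2).
Proof.
move=> S0k sk0 skk; set U := \sum_(i in S0) hh i ^+ 2; set N := Num.sqrt U.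
have U0 : 0 <= U by apply: sumr_ge0 => i _; apply: sqr_ge0.
have NN : N ^+ 2 = U by rewrite sqr_sqrtr.
have [N0|Np] := eqVneq N 0.
  have : U = 0 by rewrite -NN N0 expr0n.
  move/eqP; rewrite psumr_eq0 => [/allP H|i _]; last by apply: sqr_ge0.
  rewrite N0 mulr0 big1 // => i iS; have := H i; rewrite mem_index_enum => /(_ isT).
  by rewrite iS /= sqrf_eq0 => /eqP ->; rewrite normr0.
have Npos : 0 < N by rewrite lt_def Np sqrtr_ge0.
set th := N / sk.
have thp : 0 < th by apply: divr_gt0.
have key : 2 * th * \sum_(i in S0) `|hh i| <= U + #|S0|%:R * th ^+ 2.
  rewrite mulr_sumr /U (mulr_natl (th ^+ 2)) -sumr_const -big_split /=.
  apply: ler_sum => i _; have := sqr_ge0 (`|hh i| - th).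
  rewrite -[hh i ^+ 2]real_normK ?num_real //; nra.
have key2 : #|S0|%:R * th ^+ 2 <= U.
  have : #|S0|%:R <= k%:R :> R by rewrite ler_nat.
  have -> : U = k%:R * th ^+ 2 by rewrite /th -skk -NN; field; lra.
  move=> H; apply: ler_wpM2r => //; apply: sqr_ge0.
have : th * \sum_(i in S0) `|hh i| <= th * (sk * N).
  have -> : th * (sk * N) = U by rewrite /th -NN; field; lra.
  lra.
by rewrite ler_pM2l.
Qed.
End S.

Section S2.
Variable R : rcfType.
Lemma pair_bound m n k (A : 'M[R]_(m, n)) d (u z : 'cV[R]_n) (S0 E : {set 'I_n}) :
  (#|S0| <= k)%N -> (#|E| <= k)%N -> E \subset ~: S0 ->
  (forall i, i \notin S0 -> u i ord0 = 0) -> (forall i, i \notin E -> z i ord0 = 0) ->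
  RIP_holds A (2 * k) d ->
  (dotv (A *m u) (A *m z)) ^+ 2 <=
    2 * d * norm2sq z * (norm2sq (A *m u) - (1 - d) * norm2sq u).
Proof.
move=> S0k Ek ES uS zE RIP.
have uz : dotv u z = 0.
  rewrite /dotv big1 // => i _; case: (boolP (i \in S0)) => iS.
    rewrite zE ?mulr0 //; apply/negP => iE; move/subsetP: ES => /(_ i iE).
    by rewrite inE iS.
  by rewrite uS ?mul0r.
have zsp : ksparse (2 * k) z.
  by apply: (ksparse_sub (T := E)) => //; apply: leq_trans Ek _; lia.
have [Zl Zu] := RIP z zsp.
set X := norm2sq (A *m u); set U := norm2sq u; set Z := norm2sq z.
set ZA := norm2sq (A *m z); set p := dotv (A *m u) (A *m z).
rewrite -/Z -/ZA in Zl Zu.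
have Hq : forall t, 0 <= (X - (1 - d) * U) + (2 * p) * t + (ZA - (1 - d) * Z) * t ^+ 2.
  move=> t.
  have sp : ksparse (2 * k) (u + t *: z).
    apply: (ksparse_sub (T := S0 :|: E)).
      by apply: leq_trans (leq_card_setU _ _) _; lia.
    move=> i; rewrite inE negb_or => /andP [iS iE]; rewrite !mxE uS // zE // mulr0 addr0 //.
  have [H1 _] := RIP _ sp.
  move: H1; rewrite norm2sq_addZ uz mulr0 addr0 mulmxDr -scalemxAr norm2sq_addZ -/X -/U -/Z -/ZA -/p.
  move=> H1; nra.
have a0 : 0 <= ZA - (1 - d) * Z by lra.
have := quad_disc a0 Hq.
have D0 : 0 <= X - (1 - d) * U.
  have usp : ksparse (2 * k) u.
    by apply: (ksparse_sub (T := S0)) => //; apply: leq_trans S0k _; lia.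
  by have [H1 _] := RIP u usp; rewrite -/X -/U in H1; lra.
move=> H; have : ZA - (1 - d) * Z <= 2 * d * Z by lra.
move=> H2; have := ler_wpM2r D0 H2; nra.
Qed.
End S2.

Section S3.
Variable R : rcfType.
Lemma nsp m n k (A : 'M[R]_(m, n)) d (h : 'cV[R]_n) : (0 < k)%N ->
  RIP_holds A (2 * k) d -> d <= 4404%:R / 10000%:R -> A *m h = 0 ->
  forall S : {set 'I_n}, (#|S| <= k)%N ->
  11%:R * \sum_(i in S) `|h i ord0| <= 10%:R * \sum_(i in ~: S) `|h i ord0|.
Proof.
move=> k0 RIP dle Ah S Sk.
pose F (T : {set 'I_n}) := \sum_(i in T) `|h i ord0|.
have P0 : (#|(set0 : {set 'I_n})| <= k)%N by rewrite cards0.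
case: (@arg_maxP _ _ _ set0 (fun T : {set 'I_n} => (#|T| <= k)%N) F P0) => S0 S0k S0max.
suff H0 : 11%:R * F S0 <= 10%:R * \sum_(i in ~: S0) `|h i ord0|.
  have := S0max S Sk; have := sum_split (fun i => `|h i ord0|) S.
  have := sum_split (fun i => `|h i ord0|) S0; rewrite /F /= in H0 *; lra.
pose u : 'cV[R]_n := \col_i (if i \in S0 then h i ord0 else 0).
pose r := h - u.
have uS : forall i, i \notin S0 -> u i ord0 = 0 by move=> i iS; rewrite mxE (negbTE iS).
have rE : forall i, r i ord0 = if i \in S0 then 0 else h i ord0.
  by move=> i; rewrite !mxE; case: ifP => _; rewrite ?subrr ?subr0.
have Aur : A *m u = - (A *m r) by rewrite /r mulmxBr Ah sub0r opprK.
set U := norm2sq u.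
have UE : U = \sum_(i in S0) h i ord0 ^+ 2.
  rewrite /U /norm2sq [RHS]big_mkcond; apply: eq_bigr => i _; rewrite mxE.
  by case: ifP => // _; rewrite expr0n.
have U0 : 0 <= U := norm2sq_ge0 u.
set N := Num.sqrt U; pose sk := Num.sqrt (k%:R : R).
have N0 : 0 <= N := sqrtr_ge0 _.
have NN : N ^+ 2 = U by rewrite sqr_sqrtr.
have sk0 : 0 < sk by rewrite sqrtr_gt0 ltr0n.
have skk : sk ^+ 2 = k%:R by rewrite sqr_sqrtr ?ler0n.
set X := norm2sq (A *m u); set D := X - (1 - d) * U; set B := Num.sqrt (2 * d * D).
have usp : ksparse (2 * k) u.
  by apply: (ksparse_sub (T := S0)) => //; apply: leq_trans S0k _; lia.
have D0 : 0 <= D by have [H1 _] := RIP u usp; rewrite -/U -/X in H1; rewrite /D; lra.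
pose g := A^T *m (A *m u).
pose f i := - g i ord0 * Num.sg (r i ord0).
have Hcond : forall E : {set 'I_n}, E \subset ~: S0 -> (#|E| <= k)%N ->
    \sum_(i in E) f i <= B * Num.sqrt #|E|%:R.
  move=> E ES Ek.
  pose z : 'cV[R]_n := \col_i (if i \in E then - Num.sg (r i ord0) else 0).
  have zE : forall i, i \notin E -> z i ord0 = 0 by move=> i iE; rewrite mxE (negbTE iE).
  have pE : dotv (A *m u) (A *m z) = \sum_(i in E) f i.
    rewrite dot_AtA [RHS]big_mkcond; apply: eq_bigr => i _.
    rewrite [z i ord0]mxE /f; case: ifP => _; last by rewrite mulr0.
    by rewrite /g mulrN mulNr.
  have Zle : norm2sq z <= #|E|%:R.
    have -> : norm2sq z = \sum_(i in E) Num.sg (r i ord0) ^+ 2.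
      rewrite /norm2sq [RHS]big_mkcond; apply: eq_bigr => i _; rewrite mxE.
      by case: ifP => _; rewrite ?sqrrN ?expr0n.
    rewrite -sumr_const; apply: ler_sum => i _; rewrite sqr_sg.
    by case: (_ != 0); rewrite ?ler01.
  have PB := pair_bound S0k Ek ES uS zE RIP.
  rewrite -/U -/X -/D pE in PB; rewrite -pE in PB *.
  set p := dotv (A *m u) (A *m z) in PB *.
  have Z0 := norm2sq_ge0 z.
  have [hD|hD] := lerP (2 * d * D) 0.
    have p0 : p = 0.
      apply: sq_le0; apply: le_trans PB _.
      have -> : 2 * d * norm2sq z * D = (2 * d * D) * norm2sq z by ring.
      by apply: mulr_le0_ge0.
    by rewrite p0; apply: mulr_ge0; apply: sqrtr_ge0.
  apply: le_trans (ler_norm p) _; rewrite -sqrtr_sqr /B -sqrtrM; last by apply: ltW.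
  apply: ler_wsqrtr; apply: le_trans PB _.
  have -> : 2 * d * norm2sq z * D = (2 * d * D) * norm2sq z by ring.
  by apply: ler_wpM2l => //; apply: ltW.
have B0 : 0 <= B := sqrtr_ge0 _.
have Hset := set_bound k0 sk0 skk B0 Hcond.
set th := N / sk.
have th0 : 0 <= th by apply: divr_ge0 => //; apply: ltW.
have rb : forall i, 0 <= `|r i ord0| <= th.
  move=> i; rewrite normr_ge0 /= rE; case: (boolP (i \in S0)) => iS; first by rewrite normr0.
  have := top_prop S0k S0max iS; rewrite -UE -NN => Hk.
  rewrite -(ler_pXn2r (n := 2)) ?nnegrE //.
  rewrite real_normK ?num_real // /th expr_div_n skk.
  rewrite ler_pdivlMr ?ltr0n // mulrC //.
have rD : forall i, i \notin ~: S0 -> `|r i ord0| = 0.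
  by move=> i; rewrite inE negbK rE => ->; rewrite normr0.
have HL := layer sk0 B0 Hset th0 rb rD.
have XE : \sum_i f i * `|r i ord0| = X.
  rewrite /X norm2sq_dot {2}Aur dotvN dot_AtA -sumrN; apply: eq_bigr => i _.
  by rewrite /f -mulrA mulr_sg_norm mulNr.
have aE : \sum_i `|r i ord0| = \sum_(i in ~: S0) `|h i ord0|.
  rewrite (sum_split _ S0) big1 ?add0r => [|i iS]; last by rewrite rE iS normr0.
  by apply: eq_bigr => i; rewrite inE rE => /negbTE ->.
rewrite XE aE in HL.
have thE : sk * th / 4 = N / 4 by rewrite /th; field; apply: lt0r_neq0.
rewrite thE in HL.
have Fb : F S0 <= sk * N by rewrite /F /N UE; exact: (l1_bound _ S0k sk0 skk).
have a0 : 0 <= \sum_(i in ~: S0) `|h i ord0| by apply: sumr_ge0 => i _; apply: normr_ge0.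
have fin : 11%:R * (sk * N) <= 10%:R * \sum_(i in ~: S0) `|h i ord0|.
  apply: (final_alg (X := X) (B := B) (d := d) (W := (\sum_(i in ~: S0) `|h i ord0|) / sk + N / 4)) => //.
  - exact: norm2sq_ge0.
  - by rewrite NN; have [H1 _] := RIP u usp; rewrite -/U -/X in H1; lra.
  - have [hD|hD] := lerP (2 * d * D) 0; first by left; rewrite /B ler0_sqrtr.
    right; split; first by move: hD D0; nra.
    by split => //; rewrite /B sqr_sqrtr ?(ltW hD) // /D NN.
lra.
Qed.
End S3.

Unset Implicit Arguments. Set Strict Implicit.

Lemma le_normInf (R : rcfType) n (x : 'cV[R]_n) i : `|x i ord0| <= normInf x.
Proof. by rewrite /normInf (bigD1 i) //= le_max lexx. Qed.

Theorem mainTheorem2 (R : rcfType) (m n k : nat) (A : 'M[R]_(m, n))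
    (x0 : 'cV[R]_n) (alpha : R) :
  ksparse k x0 ->
  (exists delta : R, is_RIP_const A (2 * k)%N delta /\ delta <= 4404%:R / 10000%:R) ->
  0 < alpha ->
  10%:R * normInf x0 <= alpha ->
  P2_unique_minimizer A (A *m x0) alpha x0.
Proof.
move=> xsp [d [[RIP dmin] dle]] a0 ainf.
have [k0|k0] := posnP k.
  exfalso; subst k.
  have H : RIP_holds A (2 * 0) (d - 1).
    move=> x xs.
    have x0' : x = 0.
      apply/matrixP => i j; rewrite (ord1 j) mxE; apply/eqP/negP => /negP xi.
      by move: xs; rewrite /ksparse (cardD1 i) inE xi.
    by rewrite x0' mulmx0 /norm2sq !big1 => [| i _ | i _]; rewrite ?mxE ?expr0n ?mulr0.
  by have := dmin _ H; lra.
pose c := (2 * alpha)^-1.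
have c0 : 0 < c by rewrite /c invr_gt0; lra.
have key : forall y, A *m y = A *m x0 ->
    P2_obj alpha x0 + c * norm2sq (y - x0) <= P2_obj alpha y.
  move=> y Ay; set h := y - x0.
  have Ah : A *m h = 0 by rewrite /h mulmxBr Ay subrr.
  set S := [set i | x0 i ord0 != 0].
  have Sk : (#|S| <= k)%N := xsp.
  have NS := nsp k0 RIP dle Ah Sk.
  rewrite /P2_obj /norm1 /norm2sq -/c.
  have E1 : \sum_i `|y i ord0| + c * \sum_i y i ord0 ^+ 2 =
            \sum_i (`|y i ord0| + c * y i ord0 ^+ 2) by rewrite mulr_sumr -big_split.
  have E2 : \sum_i `|x0 i ord0| + c * \sum_i x0 i ord0 ^+ 2 + c * \sum_i h i ord0 ^+ 2 =
            \sum_i (`|x0 i ord0| + c * x0 i ord0 ^+ 2 + c * h i ord0 ^+ 2).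
    by rewrite !mulr_sumr -!big_split.
  rewrite E1 E2 -subr_ge0 -sumrB.
  pose psi i := if i \in S then - (11%:R / 10%:R) * `|h i ord0| else `|h i ord0|.
  have Hpsi : 0 <= \sum_i psi i.
    rewrite (sum_split _ S).
    have -> : \sum_(i in S) psi i = - (11%:R / 10%:R) * \sum_(i in S) `|h i ord0|.
      by rewrite mulr_sumr; apply: eq_bigr => i iS; rewrite /psi iS.
    have -> : \sum_(i in ~: S) psi i = \sum_(i in ~: S) `|h i ord0|.
      by apply: eq_bigr => i; rewrite inE /psi => /negbTE ->.
    lra.
  apply: le_trans Hpsi _; apply: ler_sum => i _.
  have yE : y i ord0 = x0 i ord0 + h i ord0 by rewrite /h !mxE; ring.
  rewrite yE /psi; set x := x0 i ord0; set hi := h i ord0.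
  have eq2 : c * (x + hi) ^+ 2 - c * x ^+ 2 - c * hi ^+ 2 = 2 * c * x * hi by ring.
  case: ifP => iS.
    have t1 : `|x| <= `|x + hi| + `|hi|.
      by have := ler_normD (x + hi) (- hi); rewrite normrN addrK.
    have t2 : - (2 * c * x * hi) <= `|hi| / 10%:R.
      apply: le_trans (ler_norm _) _; rewrite normrN !normrM.
      have hx : `|x| <= alpha / 10%:R by have := @le_normInf _ _ x0 i; rewrite -/x; lra.
      rewrite normr_nat (ger0_norm (ltW c0)).
      have : 2 * c * `|x| <= 1 / 10%:R.
        rewrite /c; have -> : 2 * (2 * alpha)^-1 = alpha^-1 by field; lra.
        rewrite ler_pdivrMl //; lra.
      have hn := normr_ge0 hi; nra.
    lra.
  move: iS; rewrite /S inE => /negbFE /eqP x00; have xz : x = 0 := x00; rewrite xz in eq2 *.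
  rewrite add0r normr0; lra.
split => //; split.
  move=> y Ay; have := key y Ay; have := norm2sq_ge0 (y - x0); nra.
move=> y Ay Hle; have := key y Ay.
have := norm2sq_ge0 (y - x0) => H0 H1.
have Z : norm2sq (y - x0) = 0 by nra.
apply/matrixP => i j; rewrite (ord1 j); apply/eqP; rewrite -subr_eq0.
move/eqP: Z; rewrite /norm2sq psumr_eq0 => [/allP /(_ i (mem_index_enum _)) /=|i' _]; last by apply: sqr_ge0.
by rewrite sqrf_eq0 !mxE.
Qed.
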